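(* Let $n\ge 2$ and let $k$ be an odd integer with $1\le k\le n$. Then $$c(n,n-k)=a(n,k)+a(n,k-1).$$
   Context: $c(n,j)$ is the unsigned Stirling number of the first kind (number of permutations of $\{1,\dots,n\}$ with exactly $j$ cycles; $c(n,j)=0$ for $j\le 0$ when $n\ge 1$). $A_n$ is the alternating group on $\{1,\dots,n\}$, $T(A_n)=\{(1\,2)(i\,j)\mid 1\le i<j\le n\}$, $\ell_{T(A_n)}(v)=\min\{r\ge 0\mid v=t_1\cdots t_r,\ t_i\in T(A_n)\}$, and $a(n,m)$ is the number of $v\in A_n$ with $\ell_{T(A_n)}(v)=m$. *)

(* Defs.v *)
From mathcomp Require Import all_boot all_fingroup all_solvable.
Set Implicit Arguments. Unset Strict Implicit. Unset Printing Implicit Defensive.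
Local Open Scope group_scope.

(* Points 1..n are modelled by 'I_n = {0,...,n-1}: paper's point p is ordinal p-1. *)

Definition stirling1 (n j : nat) : nat :=
  #|[set s : 'S_n | #|porbits s| == j]|.

Definition TAn (n : nat) : {set 'S_n} :=
  [set s : 'S_n | [exists a : 'I_n, exists b : 'I_n, exists i : 'I_n, exists j : 'I_n,
     [&& val a == 0%N, val b == 1%N, (i < j)%N & s == tperm a b * tperm i j]]].

Definition prodT (n r : nat) (v : 'S_n) : bool :=
  [exists t : r.-tuple 'S_n, all (mem (TAn n)) t && (\prod_(x <- t) x == v)].

Definition lenT_is (n m : nat) (v : 'S_n) : bool :=
  prodT m v && [forall r : 'I_m, ~~ prodT (val r) v].

Definition aT (n m : nat) : nat :=
  #|[set v : 'S_n | (v \in 'Alt_('I_n)) && lenT_is m v]|.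

(* Main.v *)
Require Import Defs.
From mathcomp Require Import all_boot all_fingroup all_solvable.
From mathcomp Require Import zify.
Set Implicit Arguments. Unset Strict Implicit. Unset Printing Implicit Defensive.
Local Open Scope group_scope.

Definition cc (T : finType) (s : {perm T}) := #|porbits s|.

Lemma cc_le (T : finType) (s : {perm T}) : (cc s <= #|T|)%N.
Proof. exact: leq_imset_card. Qed.

Lemma cc1 (T : finType) : cc (1 : {perm T}) = #|T|.
Proof.
rewrite /cc /porbits card_imset // => x y; move/eqP; rewrite eq_porbit_mem.
by rewrite porbit.unlock cycle1 imset_set1 /aperm perm1 inE=> /eqP.
Qed.

Lemma cc_tp (T : finType) (x y : T) s :
  cc (tperm x y * s) + (x \notin porbit s y).*2 = cc s + (x != y).
Proof. exact: porbits_mul_tperm. Qed.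

Lemma cc_ge (T : finType) (x y : T) s : (cc s <= cc (tperm x y * s) + 1)%N.
Proof.
have := cc_tp x y s.
case: (eqVneq x y) => [->|nxy]; first by rewrite tperm1 mul1g; lia.
by case: (x \in porbit s y) => /=; lia.
Qed.

Lemma cc_same (T : finType) (x y : T) s : x != y -> x \in porbit s y ->
  cc (tperm x y * s) = (cc s).+1.
Proof. move=> nxy xin; have := cc_tp x y s; rewrite nxy xin /=; lia. Qed.

Lemma factor (T : finType) (s : {perm T}) : exists ts : seq (T * T),
  [/\ all dpair ts, (size ts + cc s = #|T|)%N & s = \prod_(t <- ts) tperm t.1 t.2].
Proof.
have [m] := ubnP (#|T| - cc s)%N; elim: m s => // m IHm s Hm.
case: (pickP (fun x => s x != x)) => [x s_x | s_id]; last first.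
  have -> : s = 1 by apply/permP=> x; apply/eqP/idPn; rewrite perm1 s_id.
  by exists nil; rewrite big_nil cc1.
have nxy : x != s x by rewrite eq_sym.
have xin : x \in porbit s (s x).
  by rewrite -(expg1 s) porbit_perm porbit_id.
have hc := cc_same nxy xin.
have hle := cc_le (tperm x (s x) * s).
have [|ts [H1 H2 H3]] := IHm (tperm x (s x) * s); first by lia.
exists ((x, s x) :: ts); split => //=; first by rewrite nxy.
  by rewrite hc addnS in H2; rewrite addSn.
by rewrite big_cons -H3 tpermKg.
Qed.

Definition o0 {n} : 'I_n.+2 := ord0.
Definition o1 {n} : 'I_n.+2 := Ordinal (isT : (1 < n.+2)%N).
Definition sg {n} : 'S_n.+2 := tperm o0 o1.

Lemma o01 n : (@o0 n) != o1. Proof. by []. Qed.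

Lemma gen_mem n (x y : 'I_n.+2) : x != y -> sg * tperm x y \in TAn n.+2.
Proof.
move=> nxy; rewrite inE; apply/existsP; exists o0; apply/existsP; exists o1.
case: (ltngtP x y) => [lt|gt|eq].
- by apply/existsP; exists x; apply/existsP; exists y; rewrite lt /sg !eqxx.
- by apply/existsP; exists y; apply/existsP; exists x; rewrite gt /sg (tpermC y x) !eqxx.
- by move: nxy; rewrite (val_inj eq) eqxx.
Qed.

Lemma gen_mem' n (x y : 'I_n.+2) : x != y -> tperm x y * sg \in TAn n.+2.
Proof.
move=> nxy.
have -> : tperm x y * sg = sg * (tperm x y ^ sg).
  by rewrite conjgE mulgA mulgA /sg tpermV tperm2 mul1g.
rewrite tpermJ; apply: gen_mem.
by apply: contra nxy => /eqP /perm_inj ->.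
Qed.

Lemma pairing n (L : seq ('I_n.+2 * 'I_n.+2)) : all dpair L ->
  exists s : seq 'S_n.+2, [/\ size s = size L, all (mem (TAn n.+2)) s &
    \prod_(g <- s) g = if odd (size L) then sg * \prod_(t <- L) tperm t.1 t.2
                       else \prod_(t <- L) tperm t.1 t.2].
Proof.
elim: L => [|t L IH] /=; first by exists nil; rewrite !big_nil.
case/andP=> dt /IH [s [H1 H2 H3]].
case oL: (odd (size L)); rewrite oL in H3.
- exists ((tperm t.1 t.2 * sg) :: s); split => /=; first by rewrite H1.
    by rewrite gen_mem'.
  by rewrite /= !big_cons H3 mulgA -[_ * sg * sg]mulgA /sg tperm2 mulg1.
- exists ((sg * tperm t.1 t.2) :: s); split => /=; first by rewrite H1.
    by rewrite gen_mem.
  by rewrite /= !big_cons H3 mulgA.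
Qed.

Lemma lower n (s : seq 'S_n.+2) : all (mem (TAn n.+2)) s ->
  (2 * n.+2 <= 2 * size s + 1 + cc (\prod_(g <- s) g) + cc (sg * \prod_(g <- s) g))%N.
Proof.
elim: s => [|g s IH] /=.
  rewrite big_nil mulg1 cc1 card_ord.
  have := cc_ge o0 o1 (1 : 'S_n.+2); rewrite mulg1 cc1 card_ord; rewrite /sg. move=> h _; rewrite /reverse_coercion; lia.
case/andP=> /[!inE] /existsP[a /existsP[b /existsP[i /existsP[j]]]].
case/and4P=> /eqP a0 /eqP b1 _ /eqP ->.
have -> : a = o0 by apply: val_inj.
have -> : b = o1 by apply: val_inj.
move=> /IH {}IH; rewrite big_cons.
set w := \prod_(g <- s) g in IH *.
have e1 : sg * (sg * tperm i j * w) = tperm i j * w.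
  by rewrite !mulgA /sg tperm2 mul1g.
have e2 : sg * tperm i j * w = (tperm i j ^ sg) * (sg * w).
  by rewrite conjgE /sg tpermV !mulgA -(mulgA _ _ (tperm o0 o1)) tperm2 mulg1.
rewrite -/sg e1 e2 tpermJ.
have h1 := cc_ge i j w.
have h2 := cc_ge (sg i) (sg j) (sg * w).
set A := cc w in IH h1 *; set B := cc (sg * w) in IH h2 *.
set C := cc (tperm i j * w) in h1 *; set D := cc (tperm (sg i) (sg j) * (sg * w)) in h2 *.
lia.
Qed.

Lemma prodT_of_seq n r (v : 'S_n.+2) (s : seq 'S_n.+2) :
  size s = r -> all (mem (TAn n.+2)) s -> \prod_(g <- s) g = v -> prodT r v.
Proof.
move=> Hs Ha Hp; apply/existsP.
have Hs' : size s == r by rewrite Hs.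
by exists (Tuple Hs'); rewrite /= Ha Hp eqxx.
Qed.

Lemma seq_of_prodT n r (v : 'S_n.+2) : prodT r v -> exists s : seq 'S_n.+2,
  [/\ size s = r, all (mem (TAn n.+2)) s & \prod_(g <- s) g = v].
Proof.
case/existsP=> t /andP[Ha /eqP Hp]; exists (tval t); split => //.
exact: size_tuple.
Qed.

Lemma upper n (v : 'S_n.+2) : odd_perm v = false -> exists s : seq 'S_n.+2,
  [/\ all (mem (TAn n.+2)) s, \prod_(g <- s) g = v &
      (2 * n.+2 = 2 * size s + 1 + cc v + cc (sg * v))%N].
Proof.
move=> ev.
case b: (o0 \in porbit v o1).
- have hc := cc_same (o01 n) b; rewrite -/sg in hc.
  have [L [dL sL pL]] := factor (sg * v).
  have oL : odd (size L).
    by rewrite -odd_perm_prod // -pL odd_mul_tperm ev.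
  have [s [s1 s2 s3]] := pairing dL; rewrite oL -pL in s3.
  exists s; split => //; first by rewrite s3 mulgA /sg tperm2 mul1g.
  rewrite card_ord hc in sL; rewrite s1 hc; move: sL; set A := cc v; set l := size L; lia.
- have hc := cc_tp o0 o1 v; rewrite b (o01 n) -/sg /= in hc.
  have [L [dL sL pL]] := factor v.
  have oL : odd (size L) = false by rewrite -odd_perm_prod // -pL.
  have [s [s1 s2 s3]] := pairing dL; rewrite oL -pL in s3.
  exists s; split => //.
  rewrite card_ord in sL; rewrite s1.
  move: hc sL; set A := cc v; set B := cc (sg * v); set l := size L; lia.
Qed.

Lemma lower' n r (v : 'S_n.+2) : prodT r v ->
  (2 * n.+2 <= 2 * r + 1 + cc v + cc (sg * v))%N.
Proof. by case/seq_of_prodT=> s [<- Ha <-]; apply: lower. Qed.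

Lemma lenT_char n m (v : 'S_n.+2) : odd_perm v = false ->
  lenT_is m v = (2 * n.+2 == 2 * m + 1 + cc v + cc (sg * v))%N.
Proof.
move=> ev; have [s [Ha Hp He]] := upper ev.
have Pf : prodT (size s) v by apply: (prodT_of_seq (erefl _) Ha Hp).
move: He; set A := cc v; set B := cc (sg * v) => He.
apply/idP/idP.
- case/andP=> Pm /forallP Hr.
  have h1 := lower' Pm; rewrite -/A -/B in h1.
  case: (ltnP (size s) m) => [lt|ge].
    by have := Hr (Ordinal lt); rewrite /= Pf.
  apply/eqP; lia.
- move=> /eqP He2.
  have -> : m = size s by lia.
  rewrite /lenT_is Pf /=; apply/forallP=> r; apply/negP=> Pr.
  have := lower' Pr; rewrite -/A -/B; have := ltn_ord r; lia.
Qed.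

Lemma arith (N k c e : nat) (b pc : bool) :
  odd k -> (1 <= k <= N)%N -> e + b.*2 = c + 1 -> odd N = pc -> odd c = pc ->
  (e == N - k) = ((2 * N == 2 * k + 1 + c + e) || (2 * N == 2 * k.-1 + 1 + c + e))%N.
Proof.
move=> ok kN he hN hc.
have h1 := odd_double_half k; have h2 := odd_double_half N; have h3 := odd_double_half c.
rewrite ok hN hc -!addnn in h1 h2 h3 *.
clear hN hc; case: pc b h2 h3 he => [] [] /=; lia.
Qed.

Lemma perv n k (v : 'S_n.+2) : odd k -> (1 <= k <= n.+2)%N ->
  (cc (sg * v) == n.+2 - k)%N =
  ((v \in 'Alt_('I_n.+2)) && lenT_is k v || (v \in 'Alt_('I_n.+2)) && lenT_is k.-1 v).
Proof.
move=> ok kN.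
have hc := cc_tp o0 o1 v; rewrite (o01 n) -/sg /= in hc.
have ho : odd_perm (sg * v) = ~~ odd_perm v by rewrite odd_mul_tperm (o01 n).
rewrite !Alt_even.
case ev: (odd_perm v) => /=.
  apply/negP => /eqP he.
  move: ho; rewrite ev /odd_perm card_ord -/(cc _) he oddB; last by case/andP: kN.
  by rewrite ok; case: (odd _).
rewrite (@lenT_char _ k v ev) (@lenT_char _ k.-1 v ev).
have hv : odd_perm v = odd n.+2 (+) odd (cc v) by rewrite /odd_perm card_ord.
rewrite ev in hv.
apply: (@arith _ _ _ _ _ (odd (cc v))) => //; first exact: hc.
by move: hv; case: (odd _); case: (odd _).
Qed.

Lemma disj n k (v : 'S_n.+2) : (1 <= k)%N ->
  ~~ (((v \in 'Alt_('I_n.+2)) && lenT_is k v) && ((v \in 'Alt_('I_n.+2)) && lenT_is k.-1 v)).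
Proof.
move=> k1; rewrite !Alt_even.
case ev: (odd_perm v) => //=.
rewrite (@lenT_char _ k v ev) (@lenT_char _ k.-1 v ev).
set A := cc v; set B := cc (sg * v); lia.
Qed.



Theorem claim7p1 (n k : nat) :
  2 <= n -> odd k -> 1 <= k <= n ->
  stirling1 n (n - k) = aT n k + aT n k.-1.
Proof.
case: n => [|[|n]] // _ ok kN.
rewrite /stirling1 /aT.
have -> : #|[set s : 'S_n.+2 | #|porbits s| == n.+2 - k]| =
          #|[set v : 'S_n.+2 | cc (sg * v) == n.+2 - k]|.
  rewrite -(card_preimset _ (mulgI sg)); apply: eq_card => v.
  by rewrite !inE.
rewrite -cardsUI.
set X := [set v : 'S_n.+2 | _ && lenT_is k v].
set Y := [set v : 'S_n.+2 | _ && lenT_is k.-1 v].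
have k1 : (1 <= k)%N by case/andP: kN.
have -> : X :&: Y = set0.
  apply/setP => v; have D := @disj _ _ v k1.
  by move: D; rewrite !inE => D; apply: negbTE.
rewrite cards0 addn0; apply: eq_card => v.
have P := @perv _ _ v ok kN.
by move: P; rewrite !inE.
Qed.
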